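(* Let $p=5$. The function $n\mapsto F(n)/\omega(3)^n$ extends to an analytic function on $\mathbb{Z}_5$, namely $$x\mapsto \frac{2}{\sqrt5}\sinh_5\!\left(x\log_5\frac{\phi}{\omega(3)}\right);$$ that is, this series converges for all $x\in\mathbb{Z}_5$ and at every integer $n\ge0$ it equals $F(n)/\omega(3)^n$.
   Context: $F(n)$ is the Fibonacci sequence ($F(0)=0,F(1)=1,F(n+2)=F(n+1)+F(n)$). $K=\mathbb{Q}_5(\phi)$ with $\phi$ a root of $x^2-x-1$ and $\sqrt5:=2\phi-1$; $\pi=\sqrt5$ is a uniformizer and the residue field of $\mathcal O_K$ has $5$ elements. $\omega(3)$ is the unique $4$th root of unity in $\mathcal O_K$ congruent to $3$ modulo $\sqrt5$ (equivalently, the $4$th root of unity in $\mathbb{Z}_5$ congruent to $3$ mod $5$). $\log_5 y=\sum_{m\ge1}(-1)^{m+1}(y-1)^m/m$ is the $5$-adic logarithm, $\exp_5 y=\sum_{m\ge0}y^m/m!$, and $\sinh_5(y)=\frac{\exp_5(y)-\exp_5(-y)}{2}=\sum_{m\ge0}\frac{y^{2m+1}}{(2m+1)!}$. *)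

(* Defs.v *)
From mathcomp Require Import all_boot all_order all_algebra.
Set Implicit Arguments.
Unset Strict Implicit.
Unset Printing Implicit Defensive.
Import Order.TTheory GRing.Theory Num.Theory.
Local Open Scope ring_scope.

Fixpoint fib (n : nat) : nat :=
  match n with
  | 0 => 0
  | 1 => 1
  | (m.+1 as k).+1 => fib k + fib m
  end.

Section Valued.
Variables (R : realFieldType) (K : fieldType) (abs : K -> R).

Definition is_nonarch_abs : Prop :=
  [/\ forall x, 0 <= abs x,
      forall x, abs x = 0 <-> x = 0,
      forall x y, abs (x * y) = abs x * abs y
    & forall x y, abs (x + y) <= Num.max (abs x) (abs y)].

Definition cvg_to (u : nat -> K) (l : K) : Prop :=
  forall eps : R, 0 < eps -> exists N, forall n, (N <= n)%N -> abs (u n - l) < eps.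

Definition cauchy_seq (u : nat -> K) : Prop :=
  forall eps : R, 0 < eps -> exists N, forall m n, (N <= m)%N -> (N <= n)%N ->
    abs (u m - u n) < eps.

Definition complete_abs : Prop :=
  forall u, cauchy_seq u -> exists l, cvg_to u l.

Definition in_Z5 (x : K) : Prop :=
  forall eps : R, 0 < eps -> exists z : int, abs (x - z%:~R) < eps.

Definition log_partial (y : K) (N : nat) : K :=
  \sum_(1 <= m < N) (-1) ^+ m.+1 * (y - 1) ^+ m / m%:R.

Definition sinh_partial (y : K) (N : nat) : K :=
  \sum_(m < N) y ^+ (2 * m).+1 / ((2 * m).+1)`!%:R.

End Valued.

(* Main.v *)
Require Import Defs.
From mathcomp Require Import all_boot all_order all_algebra.
From mathcomp Require Import ring lra zify.
From Stdlib Require Import ClassicalEpsilon.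
Import Order.TTheory GRing.Theory Num.Theory.
Set Implicit Arguments.
Unset Strict Implicit.
Local Open Scope ring_scope.

Section Abs.
Variables (R : realFieldType) (K : fieldType) (abs : K -> R).
Hypothesis ab0 : forall x, 0 <= abs x.
Hypothesis abeq0 : forall x, abs x = 0 <-> x = 0.
Hypothesis abM : forall x y, abs (x * y) = abs x * abs y.
Hypothesis abD : forall x y, abs (x + y) <= Num.max (abs x) (abs y).
Hypothesis h5 : abs 5%:R = 5%:R^-1.

Lemma abs0 : abs 0 = 0.
Proof. by apply/abeq0. Qed.

Lemma abs1 : abs 1 = 1.
Proof.
have h : abs 1 = abs 1 * abs 1 by rewrite -abM mulr1.
have nz : abs 1 != 0 by apply/eqP => /abeq0 /eqP; rewrite oner_eq0.
by apply: (mulIf nz); rewrite mul1r -h.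
Qed.

Lemma absN1 : abs (-1) = 1.
Proof.
have h : abs (-1) * abs (-1) = 1 by rewrite -abM mulrNN mulr1 abs1.
have h0 := ab0 (-1).
have : (abs (-1) - 1) * (abs (-1) + 1) = 0 by rewrite mulrDr !mulrBl h; ring.
move/eqP; rewrite mulf_eq0 => /orP [/eqP|/eqP]; first by move/eqP; rewrite subr_eq0 => /eqP.
move=> e; exfalso; have : abs (-1) + 1 > 0 by lra. by rewrite e ltxx.
Qed.

Lemma absN x : abs (- x) = abs x.
Proof. by rewrite -mulN1r abM absN1 mul1r. Qed.

Lemma absB x y : abs (x - y) = abs (y - x).
Proof. by rewrite -absN opprB. Qed.

Lemma absX x n : abs (x ^+ n) = abs x ^+ n.
Proof. elim: n => [|n IH]; first by rewrite !expr0 abs1. by rewrite !exprS abM IH. Qed.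

Lemma absV x : abs (x^-1) = (abs x)^-1.
Proof.
have [->|nz] := eqVneq x 0; first by rewrite invr0 abs0 invr0.
have ne : abs x != 0 by apply/eqP => /abeq0; apply/eqP.
apply: (mulfI ne); rewrite -abM divff // abs1 divff //.
Qed.

Lemma absDiv x y : abs (x / y) = abs x / abs y.
Proof. by rewrite abM absV. Qed.

Lemma absD_le x y B : abs x <= B -> abs y <= B -> abs (x + y) <= B.
Proof. move=> h1 h2; apply: le_trans (abD x y) _; rewrite ge_max h1 h2 //. Qed.

Lemma absD_lt x y B : abs x < B -> abs y < B -> abs (x + y) < B.
Proof. move=> h1 h2; apply: le_lt_trans (abD x y) _; rewrite gt_max h1 h2 //. Qed.

Lemma absB_le x y B : abs x <= B -> abs y <= B -> abs (x - y) <= B.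
Proof. by move=> h1 h2; apply: absD_le; rewrite ?absN. Qed.

Lemma absB_lt x y B : abs x < B -> abs y < B -> abs (x - y) < B.
Proof. by move=> h1 h2; apply: absD_lt; rewrite ?absN. Qed.

Lemma abs_sum_le (I : Type) (r : seq I) (P : pred I) (F : I -> K) B :
  0 <= B -> (forall i, P i -> abs (F i) <= B) -> abs (\sum_(i <- r | P i) F i) <= B.
Proof.
move=> hB hF; apply: (big_ind (fun x => abs x <= B)) => //.
  by rewrite abs0.
by move=> x y; apply: absD_le.
Qed.

Lemma abs_sum_lt (I : Type) (r : seq I) (P : pred I) (F : I -> K) B :
  0 < B -> (forall i, P i -> abs (F i) < B) -> abs (\sum_(i <- r | P i) F i) < B.
Proof.
move=> hB hF; apply: (big_ind (fun x => abs x < B)) => //.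
  by rewrite abs0.
by move=> x y; apply: absD_lt.
Qed.

Lemma abs_nat n : abs n%:R <= 1.
Proof.
elim: n => [|n IH]; first by rewrite abs0 ler01.
by rewrite -addn1 natrD; apply: absD_le => //; rewrite abs1.
Qed.

Lemma abs_int (z : int) : abs z%:~R <= 1.
Proof. case: z => n; rewrite ?NegzE ?mulrNz ?absN; exact: abs_nat. Qed.

Lemma abs_strict x y : abs y < abs x -> abs (x + y) = abs x.
Proof.
move=> h; apply/eqP; rewrite eq_le; apply/andP; split.
  by apply: le_trans (abD x y) _; rewrite ge_max lexx ltW.
have e : x = (x + y) + - y by rewrite addrK.
have := abD (x + y) (- y); rewrite -e absN.
rewrite le_max => /orP [//|]. by rewrite leNgt h.
Qed.

Definition c5 : R := 5%:R^-1.
Lemma c5_gt0 : 0 < c5. Proof. by rewrite /c5 invr_gt0 ltr0n. Qed.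
Lemma c5_lt1 : c5 < 1. Proof. by rewrite /c5 invf_lt1 ?ltr0n // ltr1n. Qed.

Lemma abs_coprime m : coprime 5 m -> abs m%:R = 1.
Proof.
move=> cop; have [a _ hd] := @Bezoutl 5 m isT.
move: cop; rewrite /coprime => /eqP g; rewrite g in hd.
case/dvdnP: hd => k hk.
have e : (1 : K) = (k * 5)%:R - a%:R * m%:R by rewrite -hk natrD natrM addrK.
have hk5 : abs (k * 5)%:R <= c5 by rewrite natrM abM h5 -[X in _ <= X]mul1r ler_wpM2r ?invr_ge0 ?ler0n ?abs_nat.
have := abD ((k * 5)%:R) (- (a%:R * m%:R)); rewrite -e abs1 absN abM.
have := abs_nat a; have := abs_nat m; have := ab0 a%:R; have := ab0 m%:R; have := c5_lt1.
rewrite le_max => ? ? ? ? ? /orP [h|h]; first lra. apply/eqP; rewrite eq_le abs_nat /=. nra.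
Qed.

Lemma abs_natE n : (0 < n)%N -> abs n%:R = c5 ^+ logn 5 n.
Proof.
move=> n0; have [m cop e] := @pfactor_coprime 5 n isT n0.
by rewrite {1}e natrM natrX abM absX abs_coprime // h5 mul1r.
Qed.


Lemma four_lt_pow v : (4 * v < 5 ^ v)%N.
Proof. elim: v => [//|v IH]; rewrite expnS; lia. Qed.

Lemma val_nat n : (0 < n)%N -> (4 * logn 5 n < n)%N.
Proof.
move=> n0; have := dvdn_leq n0 (pfactor_dvdnn 5 n).
have := four_lt_pow (logn 5 n); lia.
Qed.

Lemma legendre_aux k n : (0 < n)%N -> (4 * \sum_(1 <= i < k) n %/ 5 ^ i < n)%N.
Proof.
elim: k n => [|k IH] n n0; first by rewrite big_geq.
case: k IH => [|k] IH; first by rewrite big_geq.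
rewrite big_nat_recl //.
under eq_bigr => i _ do rewrite expnS divnMA.
have [q0|qp] := posnP (n %/ 5).
  rewrite expn1 q0 big1 => [|i _]; last by rewrite div0n.
  by rewrite addn0 muln0.
have := IH _ qp. have := leq_divM n 5. rewrite expn1 /=.
have := divn_eq n 5; lia.
Qed.

Lemma val_fact m : (0 < m)%N -> (4 * logn 5 m`! < m)%N.
Proof. move=> m0; rewrite logn_fact //; exact: legendre_aux. Qed.

Lemma powc a w : 0 <= a -> a ^+ 2 <= c5 -> a ^+ w <= c5 ^+ (w %/ 2).
Proof.
move=> a0 ha.
have a1 : a <= 1.
  have := c5_lt1; have : a ^+ 2 = a * a by rewrite expr2. nra.
apply: (@le_trans _ _ (a ^+ (2 * (w %/ 2)))).
  by apply: ler_wiXn2l => //; rewrite mulnC leq_divM.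
rewrite exprM; apply: lerXn2r => //; rewrite ?nnegrE ?exprn_ge0 //.
exact: ltW c5_gt0.
Qed.

Lemma term_bound (z d : K) k m v :
  abs z ^+ 2 <= c5 -> abs d = c5 ^+ v -> (k <= m)%N -> (v <= (m - k) %/ 2)%N ->
  abs (z ^+ m / d) <= abs z ^+ k * c5 ^+ ((m - k) %/ 2 - v).
Proof.
move=> hz hd km vm.
have cp : 0 < c5 ^+ v by rewrite exprn_gt0 // c5_gt0.
rewrite absDiv absX hd ler_pdivrMr // -mulrA -exprD subnK //.
have -> : abs z ^+ m = abs z ^+ k * abs z ^+ (m - k) by rewrite -exprD subnKC.
by apply: ler_wpM2l; rewrite ?exprn_ge0 //; apply: powc.
Qed.


Hypothesis harch : forall eps : R, 0 < eps -> exists k, c5 ^+ k < eps.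
Hypothesis hcompl : complete_abs abs.

Lemma cpow_ev eps : 0 < eps -> exists N, forall n, (N <= n)%N -> c5 ^+ n < eps.
Proof.
move=> e0; have [k hk] := harch e0; exists k => n kn.
apply: le_lt_trans hk; apply: ler_wiXn2l => //; [exact: ltW c5_gt0|exact: ltW c5_lt1].
Qed.

Lemma small_eq0 x : (forall eps, 0 < eps -> abs x < eps) -> x = 0.
Proof.
move=> h; apply/abeq0; apply/eqP; rewrite eq_le ab0 andbT leNgt; apply/negP => hx.
by have := h _ hx; rewrite ltxx.
Qed.

Lemma small_eq0' x : (forall eps, 0 < eps -> abs x <= eps) -> x = 0.
Proof.
move=> h; apply: small_eq0 => eps e0; apply: le_lt_trans (h (eps / 2%:R) _) _.
  by rewrite divr_gt0.
rewrite ltr_pdivrMr //; lra.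
Qed.

Lemma cvg_unique u l l' : cvg_to abs u l -> cvg_to abs u l' -> l = l'.
Proof.
move=> h1 h2; apply/eqP; rewrite -subr_eq0; apply/eqP; apply: small_eq0 => eps e0.
have [N1 H1] := h1 _ e0; have [N2 H2] := h2 _ e0.
have e : l - l' = - (u (maxn N1 N2) - l) + (u (maxn N1 N2) - l') by ring.
rewrite e; apply: absD_lt; rewrite ?absN; [apply: H1|apply: H2]; lia.
Qed.

Lemma cvg_bound u l N0 B : cvg_to abs u l -> (forall n, (N0 <= n)%N -> abs (u n) <= B) ->
  abs l <= B.
Proof.
move=> h hB; rewrite leNgt; apply/negP => lB.
have B0 : 0 <= B by apply: le_trans (hB N0 (leqnn _)).
have [N HN] := h (abs l) (le_lt_trans B0 lB).
have e : l = u (maxn N N0) + - (u (maxn N N0) - l) by ring.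
have h1 := HN (maxn N N0) (leq_maxl _ _).
have h2 := hB (maxn N N0) (leq_maxr _ _).
have := abD (u (maxn N N0)) (- (u (maxn N N0) - l)); rewrite -e absN.
rewrite le_max => /orP [h3|h3]; lra.
Qed.

Lemma cvg_const a : cvg_to abs (fun _ => a) a.
Proof. by move=> eps e0; exists 0%N => n _; rewrite subrr abs0. Qed.

Lemma cvgD u v l l' : cvg_to abs u l -> cvg_to abs v l' -> cvg_to abs (fun n => u n + v n) (l + l').
Proof.
move=> h1 h2 eps e0; have [N1 H1] := h1 _ e0; have [N2 H2] := h2 _ e0.
exists (maxn N1 N2) => n hn.
have e : u n + v n - (l + l') = (u n - l) + (v n - l') by ring.
rewrite e; apply: absD_lt; [apply: H1|apply: H2]; lia.
Qed.

Lemma cvgN u l : cvg_to abs u l -> cvg_to abs (fun n => - u n) (- l).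
Proof.
move=> h eps e0; have [N H] := h _ e0; exists N => n hn.
by rewrite -opprD absN; apply: H.
Qed.

Lemma cvg_ext u v l N0 : (forall n, (N0 <= n)%N -> u n = v n) -> cvg_to abs u l -> cvg_to abs v l.
Proof.
move=> e h eps e0; have [N H] := h _ e0; exists (maxn N N0) => n hn.
rewrite -e; [apply: H|]; lia.
Qed.

Lemma cvg_sub u l (f : nat -> nat) : (forall n, (n <= f n)%N) ->
  cvg_to abs u l -> cvg_to abs (fun n => u (f n)) l.
Proof.
move=> hf h eps e0; have [N H] := h _ e0; exists N => n hn.
by apply: H; apply: leq_trans hn (hf n).
Qed.

Lemma cvg_ev_bound u l : cvg_to abs u l -> exists N M, 0 < M /\ forall n, (N <= n)%N -> abs (u n) <= M.
Proof.
move=> h; have [N H] := h 1 ltr01; exists N, (Num.max (abs l) 1); split.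
  by rewrite lt_max ltr01 orbT.
move=> n hn; have e : u n = (u n - l) + l by ring.
rewrite e; apply: absD_le; rewrite le_max ?lexx ?orbT //.
by rewrite (ltW (H n hn)) orbT.
Qed.

Lemma cvgM u v l l' : cvg_to abs u l -> cvg_to abs v l' -> cvg_to abs (fun n => u n * v n) (l * l').
Proof.
move=> h1 h2 eps e0.
have [N0 [M [M0 HM]]] := cvg_ev_bound h1.
set M' := Num.max M (Num.max (abs l') 1).
have M'0 : 0 < M' by rewrite !lt_max ltr01 !orbT.
have ee : 0 < eps / M' by rewrite divr_gt0.
have [N1 H1] := h1 _ ee; have [N2 H2] := h2 _ ee.
exists (maxn N0 (maxn N1 N2)) => n hn.
have e : u n * v n - l * l' = u n * (v n - l') + (u n - l) * l' by ring.
have hM : M <= M' by rewrite le_max lexx.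
have hl' : abs l' <= M' by rewrite !le_max lexx !orbT.
rewrite e; apply: absD_lt; rewrite abM.
  have a1 : abs (u n) <= M' by apply: le_trans (HM n _) hM; lia.
  have a2 : abs (v n - l') < eps / M' by apply: H2; lia.
  have := ab0 (u n); have := ab0 (v n - l').
  move: a2; rewrite ltr_pdivlMr // => a2 ? ?.
  apply: le_lt_trans a2; rewrite mulrC; by apply: ler_wpM2l.
have a2 : abs (u n - l) < eps / M' by apply: H1; lia.
move: a2; rewrite ltr_pdivlMr // => a2.
apply: le_lt_trans a2; apply: ler_wpM2l => //.
Qed.

Lemma series_step (P a : nat -> K) eps : (forall n, P n.+1 = P n + a n) -> 0 < eps ->
  forall m, (forall i, (m <= i)%N -> abs (a i) < eps) -> forall k, abs (P (m + k)%N - P m) < eps.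
Proof.
move=> hP e0 m ha; elim => [|k IH]; first by rewrite addn0 subrr abs0.
rewrite addnS hP.
have e : P (m + k)%N + a (m + k)%N - P m = (P (m + k)%N - P m) + a (m + k)%N by ring.
rewrite e; apply: absD_lt => //; apply: ha; lia.
Qed.

Lemma series_cvg (P a : nat -> K) : (forall n, P n.+1 = P n + a n) ->
  (forall eps, 0 < eps -> exists N, forall n, (N <= n)%N -> abs (a n) < eps) ->
  exists l, cvg_to abs P l.
Proof.
move=> hP ha; apply: hcompl => eps e0.
have [N HN] := ha _ e0; exists N => m n hm hn.
have [mn|nm] := leqP m n.
  rewrite absB -(subnKC mn); apply: series_step => // i hi; apply: HN; lia.
rewrite -(subnKC (ltnW nm)); apply: series_step => // i hi; apply: HN; lia.
Qed.


Lemma to_zero (a : nat -> K) (g : nat -> nat) M0 :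
  (forall n, exists M, forall m, (M <= m)%N -> (n <= g m)%N) ->
  (forall m, (M0 <= m)%N -> abs (a m) <= c5 ^+ g m) ->
  forall eps, 0 < eps -> exists N, forall m, (N <= m)%N -> abs (a m) < eps.
Proof.
move=> hg ha eps e0; have [n Hn] := cpow_ev e0; have [M HM] := hg n.
exists (maxn M M0) => m hm; apply: le_lt_trans (ha m _) _; first lia.
apply: Hn; apply: HM; lia.
Qed.

Lemma partial_bound (P a : nat -> K) x B N0 : (forall n, P n.+1 = P n + a n) ->
  abs (P N0 - x) <= B -> (forall n, (N0 <= n)%N -> abs (a n) <= B) ->
  forall n, (N0 <= n)%N -> abs (P n - x) <= B.
Proof.
move=> hP h0 ha; elim => [|n IH] hn.
  have e : N0 = 0%N by lia.
  by rewrite e in h0.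
have [e|lt] := eqVneq N0 n.+1; first by rewrite -e.
rewrite hP; have e : P n + a n - x = (P n - x) + a n by ring.
rewrite e; apply: absD_le; [apply: IH|apply: ha]; lia.
Qed.

Lemma lim_bound (P a : nat -> K) x B N0 l : (forall n, P n.+1 = P n + a n) ->
  abs (P N0 - x) <= B -> (forall n, (N0 <= n)%N -> abs (a n) <= B) ->
  cvg_to abs P l -> abs (l - x) <= B.
Proof.
move=> hP h0 ha hl; apply: (@cvg_bound (fun n => P n - x) _ N0).
  exact: (cvgD hl (cvg_const (- x))).
exact: partial_bound hP h0 ha.
Qed.

Lemma cvg0_diff u v l : cvg_to abs u l ->
  (forall eps, 0 < eps -> exists N, forall n, (N <= n)%N -> abs (u n - v n) < eps) ->
  cvg_to abs v l.
Proof.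
move=> h hd eps e0; have [N1 H1] := h _ e0; have [N2 H2] := hd _ e0.
exists (maxn N1 N2) => n hn.
have e : v n - l = - (u n - v n) + (u n - l) by ring.
rewrite e; apply: absD_lt; rewrite ?absN; [apply: H2|apply: H1]; lia.
Qed.

Lemma SP_eq (f g : nat -> K) N :
  \sum_(m < N) \sum_(i < m.+1) f i * g (m - i)%N =
  \sum_(i < N) f i * \sum_(j < N - i) g j.
Proof.
elim: N => [|N IH]; first by rewrite !big_ord0.
rewrite big_ord_recr /= IH.
transitivity (\sum_(i < N.+1) f i * \sum_(j < N - i) g j + \sum_(i < N.+1) f i * g (N - i)%N).
  congr (_ + _); by rewrite big_ord_recr /= subnn big_ord0 mulr0 addr0.
rewrite -big_split /=; apply: eq_bigr => i _.
have hi : (N.+1 - i = (N - i).+1)%N by have := ltn_ord i; lia.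
by rewrite hi big_ord_recr /= mulrDr.
Qed.

Lemma prod_diff (f g : nat -> K) N :
  (\sum_(i < N) f i) * (\sum_(j < N) g j) - \sum_(i < N) f i * \sum_(j < N - i) g j =
  \sum_(i < N) f i * \sum_(N - i <= j < N) g j.
Proof.
rewrite big_distrl /= -sumrB; apply: eq_bigr => i _.
rewrite -mulrBr; congr (_ * _).
rewrite -(big_mkord xpredT g) -(big_mkord xpredT g) (@big_cat_nat _ _ _ (N - i)) //= ?leq_subr //; ring.
Qed.

Lemma cauchy_prod (f g : nat -> K) A B :
  (forall i, abs (f i) <= 1) -> (forall j, abs (g j) <= 1) ->
  (forall eps, 0 < eps -> exists N, forall n, (N <= n)%N -> abs (f n) < eps) ->
  (forall eps, 0 < eps -> exists N, forall n, (N <= n)%N -> abs (g n) < eps) ->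
  cvg_to abs (fun N => \sum_(i < N) f i) A -> cvg_to abs (fun N => \sum_(j < N) g j) B ->
  cvg_to abs (fun N => \sum_(m < N) \sum_(i < m.+1) f i * g (m - i)%N) (A * B).
Proof.
move=> f1 g1 f0 g0 hA hB.
apply: cvg0_diff (cvgM hA hB) _ => eps e0.
have [Nf Hf] := f0 _ e0; have [Ng Hg] := g0 _ e0.
exists (2 * (maxn Nf Ng)).+2 => n hn.
rewrite SP_eq prod_diff; apply: abs_sum_lt => // i _; rewrite abM.
have hin : abs (\sum_(n - i <= j < n) g j) <= 1 by apply: abs_sum_le => //; rewrite ler01.
have [hi|hi] := leqP Nf i.
  have := Hf i hi; have := ab0 (f i); have := ab0 (\sum_(n - i <= j < n) g j); nra.
have hsm : abs (\sum_(n - i <= j < n) g j) < eps.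
  rewrite big_nat_cond; apply: abs_sum_lt => // j /andP [/andP [j1 j2] _].
  apply: Hg; have := ltn_ord i; lia.
have := f1 i; have := ab0 (f i); have := ab0 (\sum_(n - i <= j < n) g j); nra.
Qed.


Definition aE (z : K) (m : nat) : K := z ^+ m / (m`!)%:R.
Definition Epart (z : K) (N : nat) : K := \sum_(m < N) aE z m.

Lemma fact_abs m : abs (m`!)%:R = c5 ^+ logn 5 m`!.
Proof. by apply: abs_natE; rewrite fact_gt0. Qed.

Lemma nat_nz n : (0 < n)%N -> (n%:R : K) != 0.
Proof.
move=> n0; apply/eqP => /abeq0; rewrite abs_natE // => /eqP.
by rewrite expf_eq0 (negbTE (lt0r_neq0 c5_gt0)) andbF.
Qed.

Lemma fact_nz m : ((m`!)%:R : K) != 0.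
Proof. by apply: nat_nz; rewrite fact_gt0. Qed.

Lemma Epart_step z N : Epart z N.+1 = Epart z N + aE z N.
Proof. by rewrite /Epart big_ord_recr. Qed.

Lemma aE_bound z k m : abs z ^+ 2 <= c5 -> (k <= 2)%N -> (k <= m)%N ->
  abs (aE z m) <= abs z ^+ k * c5 ^+ ((m - k) %/ 2 - logn 5 m`!).
Proof.
move=> hz k2 km; apply: term_bound => //; first exact: fact_abs.
have [m0|mp] := posnP m.
  by rewrite m0 fact0 logn1.
have := val_fact mp; lia.
Qed.

Lemma abs_le1 z : abs z ^+ 2 <= c5 -> abs z <= 1.
Proof.
move=> hz; have := c5_lt1; have := ab0 z; rewrite expr2 in hz; nra.
Qed.

Lemma abs_lt1 z : abs z ^+ 2 <= c5 -> abs z < 1.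
Proof.
move=> hz; have := c5_lt1; have := ab0 z; rewrite expr2 in hz; nra.
Qed.

Lemma aE_le z k m : abs z ^+ 2 <= c5 -> (k <= 2)%N -> (k <= m)%N -> abs (aE z m) <= abs z ^+ k.
Proof.
move=> hz k2 km; apply: le_trans (aE_bound hz k2 km) _.
rewrite ler_piMr ?exprn_ge0 //; apply: exprn_ile1; [exact: ltW c5_gt0|exact: ltW c5_lt1].
Qed.

Lemma aE_to0 z : abs z ^+ 2 <= c5 ->
  forall eps, 0 < eps -> exists N, forall n, (N <= n)%N -> abs (aE z n) < eps.
Proof.
move=> hz; apply: (@to_zero _ (fun m => (m %/ 2 - logn 5 m`!)%N) 1).
  move=> n; exists (4 * n + 4)%N => m hm; have := val_fact (m:=m) (ltac:(lia)); lia.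
move=> m hm; have := aE_bound hz (isT : (0 <= 2)%N) (leq0n m).
by rewrite expr0 mul1r subn0.
Qed.

Lemma E_cvg z : abs z ^+ 2 <= c5 -> exists l, cvg_to abs (Epart z) l.
Proof. move=> hz; apply: series_cvg; [exact: Epart_step|exact: aE_to0]. Qed.

Definition Eexp (z : K) : K := epsilon (inhabits 0) (fun l => cvg_to abs (Epart z) l).

Lemma E_spec z : abs z ^+ 2 <= c5 -> cvg_to abs (Epart z) (Eexp z).
Proof. by move=> hz; rewrite /Eexp; apply: epsilon_spec; apply: E_cvg. Qed.

Lemma Epart1 z : Epart z 1 = 1.
Proof. by rewrite /Epart big_ord1 /aE expr0 fact0 divr1. Qed.

Lemma Epart2 z : Epart z 2 = 1 + z.
Proof. by rewrite Epart_step Epart1 /aE expr1 divr1. Qed.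

Lemma E_b1 z : abs z ^+ 2 <= c5 -> abs (Eexp z - 1) <= abs z.
Proof.
move=> hz; eapply lim_bound with (N0 := 1%N) (x := 1); [exact: Epart_step| | |exact: E_spec hz].
  by rewrite Epart1 subrr abs0.
by move=> n hn; rewrite -[abs z]expr1; apply: aE_le.
Qed.

Lemma E_b2 z : abs z ^+ 2 <= c5 -> abs (Eexp z - (1 + z)) <= abs z ^+ 2.
Proof.
move=> hz; eapply lim_bound with (N0 := 2%N) (x := 1 + z); [exact: Epart_step| | |exact: E_spec hz].
  by rewrite Epart2 subrr abs0 exprn_ge0.
by move=> n hn; apply: aE_le.
Qed.


Lemma max_sq a b : 0 <= a -> 0 <= b -> a ^+ 2 <= c5 -> b ^+ 2 <= c5 -> (Num.max a b) ^+ 2 <= c5.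
Proof. by move=> ? ? ? ?; case: (leP a b). Qed.

Lemma abs_add_sq a b : abs a ^+ 2 <= c5 -> abs b ^+ 2 <= c5 -> abs (a + b) ^+ 2 <= c5.
Proof.
move=> ha hb; apply: le_trans (max_sq (ab0 a) (ab0 b) ha hb).
apply: lerXn2r; [by rewrite nnegrE ab0|by rewrite nnegrE le_max ab0|exact: abD].
Qed.

Lemma aE_lip a b m : abs a ^+ 2 <= c5 -> abs b ^+ 2 <= c5 ->
  abs (aE a m - aE b m) <= abs (a - b).
Proof.
move=> ha hb; set Mx := Num.max (abs a) (abs b).
have M0 : 0 <= Mx by rewrite le_max ab0.
have hM := max_sq (ab0 a) (ab0 b) ha hb.
have e : aE a m - aE b m = (a - b) * ((\sum_(i < m) a ^+ (m.-1 - i) * b ^+ i) / (m`!)%:R).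
  by rewrite /aE -mulrBl subrXX mulrA.
rewrite e abM -[X in _ <= X]mulr1; apply: ler_wpM2l; first exact: ab0.
have hS : abs (\sum_(i < m) a ^+ (m.-1 - i) * b ^+ i) <= Mx ^+ m.-1.
  apply: abs_sum_le => [|i _]; first by rewrite exprn_ge0.
  rewrite abM !absX.
  have -> : Mx ^+ m.-1 = Mx ^+ (m.-1 - i) * Mx ^+ i by rewrite -exprD subnK //; have := ltn_ord i; lia.
  apply: ler_pM; rewrite ?exprn_ge0 ?ab0 //; apply: lerXn2r; rewrite ?nnegrE ?ab0 // le_max lexx ?orbT //.
have hv : (logn 5 m`! <= m.-1 %/ 2)%N.
  have [m0|mp] := posnP m; first by rewrite m0 fact0 logn1.
  have := val_fact mp; lia.
rewrite absDiv fact_abs ler_pdivrMr ?exprn_gt0 ?c5_gt0 // mul1r.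
apply: le_trans hS _; apply: le_trans (powc _ M0 hM) _.
apply: ler_wiXn2l => //; [exact: ltW c5_gt0|exact: ltW c5_lt1].
Qed.

Lemma E_lip a b : abs a ^+ 2 <= c5 -> abs b ^+ 2 <= c5 ->
  abs (Eexp a - Eexp b) <= abs (a - b).
Proof.
move=> ha hb; rewrite -[Eexp a - Eexp b]subr0.
eapply lim_bound with (N0 := 0%N) (P := fun n => Epart a n - Epart b n)
  (a := fun n => aE a n - aE b n).
- by move=> n; rewrite !Epart_step; ring.
- by rewrite /Epart !big_ord0 !subrr abs0 ab0.
- by move=> n _; apply: aE_lip.
- exact: cvgD (E_spec ha) (cvgN (E_spec hb)).
Qed.

Lemma aE_binom a b m : aE (a + b) m = \sum_(i < m.+1) aE a i * aE b (m - i)%N.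
Proof.
rewrite /aE addrC exprDn big_distrl /=; apply: eq_bigr => i _.
have im : (i <= m)%N by have := ltn_ord i; lia.
have hf := bin_fact im.
have eK : ((m`!)%:R : K) = ('C(m, i))%:R * ((i`!)%:R * ((m - i)`!)%:R) by rewrite -hf !natrM.
have cnz : (('C(m, i))%:R : K) != 0 by apply: nat_nz; rewrite bin_gt0.
have h1 := fact_nz i; have h2 := fact_nz (m - i).
rewrite eK -mulr_natr; field.
by rewrite cnz h1 h2.
Qed.

Lemma E_mul a b : abs a ^+ 2 <= c5 -> abs b ^+ 2 <= c5 -> Eexp (a + b) = Eexp a * Eexp b.
Proof.
move=> ha hb; apply: (cvg_unique (E_spec (abs_add_sq ha hb))).
have f1 : forall i, abs (aE a i) <= 1 by move=> i; rewrite -(expr0 (abs a)); apply: aE_le.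
have g1 : forall i, abs (aE b i) <= 1 by move=> i; rewrite -(expr0 (abs b)); apply: aE_le.
have H := cauchy_prod f1 g1 (aE_to0 ha) (aE_to0 hb) (E_spec ha) (E_spec hb).
eapply cvg_ext with (N0 := 0%N); last exact: H.
by move=> n _; rewrite /Epart; apply: eq_bigr => m _; rewrite aE_binom.
Qed.


Lemma sq0 : abs 0 ^+ 2 <= c5.
Proof. by rewrite abs0 expr0n /= ltW ?c5_gt0. Qed.

Lemma E0 : Eexp 0 = 1.
Proof.
apply: (cvg_unique (E_spec sq0)).
eapply cvg_ext with (N0 := 1%N); last exact: cvg_const.
elim => [//|n IH] _; case: n IH => [|n] IH; first by rewrite Epart1.
by rewrite Epart_step -IH // /aE expr0n /= mul0r addr0.
Qed.

Lemma sq_le a b : abs a <= abs b -> abs b ^+ 2 <= c5 -> abs a ^+ 2 <= c5.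
Proof.
move=> h hb; apply: le_trans hb; apply: lerXn2r; rewrite ?nnegrE ?ab0 //.
Qed.

Lemma abs_natmul n z : abs (n%:R * z) <= abs z.
Proof. rewrite abM -[X in _ <= X]mul1r; apply: ler_wpM2r; [exact: ab0|exact: abs_nat]. Qed.

Lemma E_nat n z : abs z ^+ 2 <= c5 -> Eexp (n%:R * z) = Eexp z ^+ n.
Proof.
move=> hz; elim: n => [|n IH]; first by rewrite mul0r E0 expr0.
rewrite -addn1 natrD mulrDl mul1r E_mul ?IH ?exprD ?expr1 //.
exact: sq_le (abs_natmul n z) hz.
Qed.

Lemma E_neg z : abs z ^+ 2 <= c5 -> Eexp (- z) * Eexp z = 1.
Proof.
move=> hz; rewrite -E_mul ?addNr ?E0 //; apply: sq_le hz; by rewrite absN.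
Qed.


Definition aL (y : K) (m : nat) : K := (-1) ^+ m.+1 * (y - 1) ^+ m / m%:R.

Lemma LP_step y N : log_partial y N.+1 = log_partial y N + aL y N.
Proof.
rewrite /log_partial; case: N => [|N].
  by rewrite !big_geq // /aL expr0 invr0 mulr0 add0r.
by rewrite big_nat_recr.
Qed.

Lemma abs_sgn m : abs ((-1) ^+ m) = 1.
Proof. by rewrite absX absN1 expr1n. Qed.

Lemma aL_bound y k m : abs (y - 1) ^+ 2 <= c5 -> (k <= 1)%N -> (1 <= m)%N ->
  abs (aL y m) <= abs (y - 1) ^+ k * c5 ^+ ((m - k) %/ 2 - logn 5 m).
Proof.
move=> ht k1 m1; rewrite /aL -mulrA abM abs_sgn mul1r.
apply: term_bound => //; first exact: abs_natE.
  lia.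
have := val_nat m1; lia.
Qed.

Lemma aL_le y m : abs (y - 1) ^+ 2 <= c5 -> abs (aL y m) <= abs (y - 1).
Proof.
move=> ht; have [m0|mp] := posnP m.
  by rewrite m0 /aL invr0 mulr0 abs0 ab0.
apply: le_trans (aL_bound ht (isT : (1 <= 1)%N) mp) _.
rewrite expr1 ler_piMr ?ab0 //; apply: exprn_ile1; [exact: ltW c5_gt0|exact: ltW c5_lt1].
Qed.

Lemma aL_to0 y : abs (y - 1) ^+ 2 <= c5 ->
  forall eps, 0 < eps -> exists N, forall n, (N <= n)%N -> abs (aL y n) < eps.
Proof.
move=> ht; apply: (@to_zero _ (fun m => ((m - 1) %/ 2 - logn 5 m)%N) 1).
  move=> n; exists (4 * n + 4)%N => m hm; have := val_nat (n:=m) (ltac:(lia)); lia.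
move=> m hm; apply: le_trans (aL_bound ht (isT : (1 <= 1)%N) hm) _.
rewrite expr1 ler_piMl ?exprn_ge0 ?ltW ?c5_gt0 //; exact: abs_lt1.
Qed.

Lemma L_cvg y : abs (y - 1) ^+ 2 <= c5 -> exists L, cvg_to abs (log_partial y) L.
Proof. by move=> ht; apply: series_cvg; [exact: LP_step|exact: aL_to0]. Qed.

Lemma L_bound y L : abs (y - 1) ^+ 2 <= c5 -> cvg_to abs (log_partial y) L -> abs L <= abs (y - 1).
Proof.
move=> ht hL; rewrite -[L]subr0.
eapply lim_bound with (N0 := 0%N) (x := 0) (P := log_partial y) (a := aL y); [exact: LP_step| | |exact: hL].
  by rewrite /log_partial big_geq // subrr abs0 ab0.
by move=> n _; apply: aL_le.
Qed.

Lemma tail_bound P a l M B : (forall n, P n.+1 = P n + a n) -> 0 <= B ->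
  (forall n, (M <= n)%N -> abs (a n) <= B) -> cvg_to abs P l -> abs (P M - l) <= B.
Proof.
move=> hP B0 ha hl; rewrite absB.
eapply lim_bound with (N0 := M) (x := P M); [exact: hP| | exact: ha|exact: hl].
by rewrite subrr abs0.
Qed.

Lemma Q_close N j : (j < N)%N ->
  abs ((('C(N.-1, j) * j`!)%N)%:R - (-1) ^+ j * (j`!)%:R) <= abs (N%:R : K).
Proof.
elim: j => [|j IH] hj.
  by rewrite bin0 fact0 expr0 mul1r subrr abs0 ab0.
have e1 : (('C(N.-1, j.+1) * j.+1`!)%N = ('C(N.-1, j) * j`!) * (N.-1 - j))%N.
  by rewrite !bin_ffact ffactnSr.
have e2 : ((N.-1 - j)%N%:R : K) = N%:R - (j.+1)%:R.
  have -> : (N.-1 - j = N - j.+1)%N by lia.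
  by rewrite natrB //; lia.
set Q := (('C(N.-1, j) * j`!)%N)%:R : K.
set Rj := (-1) ^+ j * (j`!)%:R : K.
have e : ((('C(N.-1, j.+1) * j.+1`!)%N)%:R - (-1) ^+ j.+1 * (j.+1`!)%:R : K)
   = (Q - Rj) * (N%:R - (j.+1)%:R) + Rj * N%:R.
  rewrite e1 natrM -e2 /Q /Rj factS natrM exprS e2; ring.
rewrite e; apply: absD_le; rewrite abM.
  rewrite -[X in _ <= X]mulr1; apply: ler_pM; rewrite ?ab0 ?IH //; first lia.
  by rewrite -e2 abs_nat.
rewrite -[X in _ <= X]mul1r; apply: ler_wpM2r; first exact: ab0.
by rewrite /Rj abM abs_sgn mul1r abs_nat.
Qed.


Lemma term_eq (t : K) N i : (i < N)%N ->
  t ^+ i.+1 *+ 'C(N, i.+1) / N%:R - aL (1 + t) i.+1 =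
  aE t i.+1 * ((('C(N.-1, i) * i`!)%N)%:R - (-1) ^+ i * (i`!)%:R).
Proof.
move=> iN.
have hb := mul_bin_diag N i.
have N0 : (N%:R : K) != 0 by apply: nat_nz; lia.
have i0 : ((i.+1)%:R : K) != 0 by apply: nat_nz.
have f0 := fact_nz i.
have eC : ('C(N, i.+1)%:R : K) = N%:R * ('C(N.-1, i))%:R / (i.+1)%:R.
  by rewrite -natrM hb natrM mulrC mulKf.
rewrite /aL /aE (_ : 1 + t - 1 = t); last by ring.
rewrite -mulr_natr eC factS !natrM.
have -> : (-1) ^+ i.+2 = (-1) ^+ i :> K by rewrite !exprS mulrA mulrNN mulr1 mul1r.
field; rewrite f0 N0 andbT (_ : 1 + i%:R = (i.+1)%:R) ?i0 //; by rewrite -natr1 addrC.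
Qed.

Lemma Lk_close y N : abs (y - 1) ^+ 2 <= c5 -> (0 < N)%N ->
  abs ((y ^+ N - 1) / N%:R - log_partial y N.+1) <= abs (N%:R : K).
Proof.
move=> ht N0; set t := y - 1.
have ey : y = 1 + t by rewrite /t addrC subrK.
have eS : y ^+ N - 1 = \sum_(1 <= j < N.+1) t ^+ j *+ 'C(N, j).
  rewrite ey exprDn -(big_mkord xpredT (fun j => 1 ^+ (N - j) * t ^+ j *+ 'C(N, j))) big_nat_recl // bin0 subn0 expr0 expr1n !mul1r mulr1n [1 + _]addrC addrK big_add1.
  by apply: eq_bigr => j _; rewrite expr1n mul1r.
rewrite eS /log_partial big_distrl /= -sumrB.
rewrite big_nat_cond; apply: abs_sum_le => [|j /andP [/andP [j1 j2] _]]; first exact: ab0.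
case: j j1 j2 => [//|i] _ hi.
rewrite ey -/t term_eq; last lia.
rewrite abM -[X in _ <= X]mul1r; apply: ler_pM; rewrite ?ab0 //.
  by rewrite -(expr0 (abs t)); apply: aE_le.
apply: Q_close; lia.
Qed.


Lemma pow5 u : abs (u - 1) ^+ 2 <= c5 -> abs (u ^+ 5 - 1) = c5 * abs (u - 1).
Proof.
move=> hu; set h := u - 1.
have hl1 := abs_lt1 hu; have h0 := ab0 h.
have eu : u = 1 + h by rewrite /h addrC subrK.
set w := 2%:R * h + 2%:R * h ^+ 2 + h ^+ 3.
have e : u ^+ 5 - 1 = 5%:R * h * (1 + w) + h ^+ 5 by rewrite eu /w; ring.
have a2 : abs (2%:R : K) <= 1 by apply: abs_nat.
have hw : abs w < 1.
  have hh2 : abs (h ^+ 2) <= abs h by rewrite absX expr2; have := ab0 h; nra.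
  have hh3 : abs (h ^+ 3) <= abs h.
    rewrite absX exprS; have := exprn_ile1 2 h0 (ltW hl1); have := exprn_ge0 2 h0; nra.
  apply: le_lt_trans hl1; apply: absD_le; [apply: absD_le|by []].
    by rewrite abM; have := ab0 (2%:R : K); nra.
  by rewrite abM; have := ab0 (2%:R : K); have := ab0 (h ^+ 2); nra.
have aw : abs (1 + w) = 1 by rewrite abs_strict abs1.
have a5 : abs (5%:R * h * (1 + w)) = c5 * abs h by rewrite !abM aw h5 mulr1.
rewrite e; have [hz|hnz] := eqVneq h 0.
  by rewrite hz expr0n /= addr0 mulr0 mul0r abs0 mulr0.
have hp : 0 < abs h by rewrite lt_def ab0 andbT; apply/eqP => /abeq0; apply/eqP.
rewrite -a5 abs_strict // absX a5.
have c0 := c5_gt0; have c1 := c5_lt1.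
have e5 : abs h ^+ 5 = abs h * (abs h ^+ 2) ^+ 2 by rewrite -exprM -exprS.
rewrite e5 mulrC ltr_pM2r //.
apply: le_lt_trans (_ : c5 ^+ 2 < c5).
  apply: lerXn2r; rewrite ?nnegrE ?exprn_ge0 ?ab0 //; exact: ltW.
by rewrite expr2; nra.
Qed.

Lemma powk u k : abs (u - 1) ^+ 2 <= c5 -> abs (u ^+ (5 ^ k) - 1) = c5 ^+ k * abs (u - 1).
Proof.
move=> hu; elim: k => [|k IH]; first by rewrite expn0 expr1 expr0 mul1r.
have hk : abs (u ^+ (5 ^ k) - 1) ^+ 2 <= c5.
  apply: sq_le hu; rewrite IH ler_piMl ?ab0 //.
  apply: exprn_ile1; [exact: ltW c5_gt0|exact: ltW c5_lt1].
by rewrite expnS mulnC exprM pow5 // IH exprS mulrA.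
Qed.


Lemma abs_y1 y : abs (y - 1) ^+ 2 <= c5 -> abs y = 1.
Proof.
move=> ht; have ey : y = 1 + (y - 1) by rewrite addrC subrK.
by rewrite ey abs_strict abs1 // abs_lt1.
Qed.

Lemma EL_eq y L : abs (y - 1) ^+ 2 <= c5 -> cvg_to abs (log_partial y) L -> Eexp L = y.
Proof.
move=> ht hL; set t := y - 1.
have hLb := L_bound ht hL.
have hL2 : abs L ^+ 2 <= c5 by apply: sq_le ht.
have ay : abs y = 1 := abs_y1 ht.
have ynz : y != 0 by apply/eqP => y0; move: ay; rewrite y0 abs0 => /eqP; rewrite eq_sym oner_eq0.
apply/eqP; rewrite -subr_eq0; apply/eqP; apply: small_eq0' => eps e0.
have [k1 Hk1] := cpow_ev e0.
have [M HM] := aL_to0 ht e0.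
set k := maxn k1 M; set N := (5 ^ k)%N.
have kN : (k < N)%N by apply: ltn_expl.
have N0 : (0 < N)%N by rewrite expn_gt0.
have aN : abs (N%:R : K) = c5 ^+ k by rewrite abs_natE // pfactorK.
have ck : c5 ^+ k <= eps by apply: ltW; apply: Hk1; rewrite leq_maxl.
set Lk := (y ^+ N - 1) / N%:R.
have hLa : abs (L - Lk) <= eps.
  have e : L - Lk = - (log_partial y N.+1 - L) + - (Lk - log_partial y N.+1) by ring.
  rewrite e; apply: absD_le; rewrite absN.
    eapply tail_bound with (a := aL y); [exact: LP_step|exact: ltW| |exact: hL].
    by move=> n hn; apply: ltW; apply: HM; have := leq_maxr k1 M; lia.
  by apply: le_trans (Lk_close ht N0) _; rewrite aN.
have ps := powk k ht.
have cpos : 0 < c5 ^+ k by rewrite exprn_gt0 // c5_gt0.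
have aLk : abs Lk = abs t by rewrite /Lk absDiv ps aN mulrC mulKf // lt0r_neq0.
have hLk2 : abs Lk ^+ 2 <= c5 by rewrite aLk.
have hd : abs (Eexp L - Eexp Lk) <= eps by apply: le_trans (E_lip hL2 hLk2) hLa.
set s := y ^+ N - 1.
have Nnz : (N%:R : K) != 0 by apply: nat_nz.
have es : s = N%:R * Lk by rewrite /Lk mulrC divfK.
have Es : Eexp s = Eexp Lk ^+ N by rewrite es E_nat.
have as_ : abs s = c5 ^+ k * abs t by [].
have hs2 : abs s ^+ 2 <= c5.
  apply: sq_le ht; rewrite as_ ler_piMl ?ab0 //.
  apply: exprn_ile1; [exact: ltW c5_gt0|exact: ltW c5_lt1].
have hEs := E_b2 hs2.
set u := Eexp Lk / y.
have eu : Eexp Lk - y = (u - 1) * y by rewrite /u mulrBl divfK // mul1r.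
have hu : abs (u - 1) <= abs t.
  have e : u - 1 = (Eexp Lk - y) / y by rewrite eu mulfK.
  rewrite e absDiv ay divr1.
  have e2 : Eexp Lk - y = (Eexp Lk - 1) + - t by rewrite /t; ring.
  rewrite e2; apply: absD_le; rewrite ?absN //.
  by rewrite -aLk; apply: E_b1.
have hu2 : abs (u - 1) ^+ 2 <= c5 by apply: sq_le ht.
have ayN : abs (y ^+ N) = 1 by rewrite absX ay expr1n.
have yNnz : y ^+ N != 0 by rewrite expf_neq0.
have euN : u ^+ N - 1 = (Eexp s - (1 + s)) / y ^+ N.
  have e1s : 1 + s = y ^+ N by rewrite /s; ring.
  rewrite e1s /u exprMn -Es exprVn; field; exact: yNnz.
have bnd : c5 ^+ k * abs (u - 1) <= c5 ^+ k * (c5 ^+ k * c5).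
  rewrite -powk // euN absDiv ayN divr1; apply: le_trans hEs _.
  rewrite as_ exprMn mulrA -expr2 ler_wpM2l //; by rewrite !exprn_ge0 // ltW // c5_gt0.
have hu' : abs (u - 1) <= c5 ^+ k * c5 by rewrite -(ler_pM2l cpos).
have hd2 : abs (Eexp Lk - y) <= eps.
  rewrite eu abM ay mulr1; apply: le_trans hu' _; apply: le_trans ck.
  by rewrite ler_piMr ?exprn_ge0 ?ltW ?c5_gt0 ?c5_lt1.
have e : Eexp L - y = (Eexp L - Eexp Lk) + (Eexp Lk - y) by ring.
by rewrite e; apply: absD_le.
Qed.


Lemma sinh_eq z N : sinh_partial z N = (Epart z (2 * N) - Epart (- z) (2 * N)) / 2%:R.
Proof.
elim: N => [|N IH]; first by rewrite /sinh_partial /Epart muln0 !big_ord0 subrr mul0r.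
rewrite /sinh_partial big_ord_recr /= -/(sinh_partial z N) IH.
have -> : (2 * N.+1 = (2 * N).+2)%N by lia.
rewrite !Epart_step /aE.
have e1 : (- z) ^+ (2 * N) = z ^+ (2 * N) by rewrite exprNn exprM sqrrN expr1n expr1n mul1r.
have e2 : (- z) ^+ (2 * N).+1 = - z ^+ (2 * N).+1 by rewrite exprS e1 exprS mulNr.
rewrite e1 e2.
have t2 : (2%:R : K) != 0 by apply: nat_nz.
field; by rewrite t2 !fact_nz.
Qed.

Lemma sinh_cvg z : abs z ^+ 2 <= c5 ->
  cvg_to abs (sinh_partial z) ((Eexp z - Eexp (- z)) / 2%:R).
Proof.
move=> hz; have hz' : abs (- z) ^+ 2 <= c5 by rewrite absN.
have f2 : forall n, (n <= 2 * n)%N by move=> n; lia.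
have h1 := cvg_sub f2 (E_spec hz).
have h2 := cvg_sub f2 (E_spec hz').
have H := cvgM (cvgD h1 (cvgN h2)) (cvg_const (2%:R^-1)).
eapply cvg_ext with (N0 := 0%N); last exact: H.
by move=> n _ /=; rewrite sinh_eq.
Qed.


Lemma binet (phi : K) n : phi ^+ 2 = phi + 1 ->
  phi ^+ n - (1 - phi) ^+ n = (2%:R * phi - 1) * (fib n)%:R.
Proof.
move=> hphi.
have hpsi : (1 - phi) ^+ 2 = (1 - phi) + 1.
  have e : (1 - phi) ^+ 2 = (1 - phi) + 1 + (phi ^+ 2 - phi - 1) by ring.
  by rewrite e hphi; ring.
suff : forall n, (phi ^+ n - (1 - phi) ^+ n = (2%:R * phi - 1) * (fib n)%:R) /\
  (phi ^+ n.+1 - (1 - phi) ^+ n.+1 = (2%:R * phi - 1) * (fib n.+1)%:R) by move/(_ n) => [].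
elim => [|m [IH1 IH2]].
  by split; rewrite /= ?expr0 ?subrr ?mulr0 ?expr1 ?mulr1 //; ring.
split => //.
have ef : fib m.+2 = (fib m.+1 + fib m)%N by [].
have ex : forall x : K, x ^+ 2 = x + 1 -> x ^+ m.+2 = x ^+ m.+1 + x ^+ m.
  by move=> x hx; rewrite -(addn2 m) exprD hx mulrDr mulr1 exprS mulrC.
rewrite ef natrD mulrDr -IH1 -IH2 (ex _ hphi) (ex _ hpsi); ring.
Qed.

Lemma core (phi omega : K) : phi ^+ 2 = phi + 1 -> omega ^+ 2 = -1 ->
  abs (phi / omega - 1) ^+ 2 <= c5 -> (2%:R * phi - 1) ^+ 2 = 5%:R ->
  exists L : K,
    cvg_to abs (log_partial (phi / omega)) L /\
    forall x : K, in_Z5 abs x ->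
      exists s : K,
        cvg_to abs (sinh_partial (x * L)) s /\
        forall n : nat, x = n%:R ->
          2%:R / (2%:R * phi - 1) * s = (fib n)%:R / omega ^+ n.
Proof.
move=> hphi hom ht hs5.
set y := phi / omega.
have [L hL] := L_cvg ht; exists L; split => // x hx.
have hLb := L_bound ht hL.
have ax : abs x <= 1.
  have [z hz] := hx 1 ltr01.
  have e : x = (x - z%:~R) + z%:~R by ring.
  by rewrite e; apply: absD_le; [apply: ltW|apply: abs_int].
have hxL : abs (x * L) ^+ 2 <= c5.
  apply: sq_le ht; rewrite abM; apply: le_trans hLb.
  rewrite -[X in _ <= X]mul1r; apply: ler_wpM2r => //; exact: ab0.
eexists; split; first exact: sinh_cvg hxL.
move=> n ->.
have hL2 : abs L ^+ 2 <= c5 by apply: sq_le ht.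
have EL := EL_eq ht hL.
have En : Eexp (n%:R * L) = y ^+ n by rewrite E_nat // EL.
have p0 : phi != 0 by apply/eqP => p0; move: hphi; rewrite p0 expr0n /= add0r => /eqP; rewrite eq_sym oner_eq0.
have o0 : omega != 0 by apply/eqP => o0; move: hom; rewrite o0 expr0n /= => /eqP; rewrite eq_sym oppr_eq0 oner_eq0.
have yn0 : y ^+ n != 0 by rewrite expf_neq0 // /y mulf_neq0 ?invr_eq0.
have Em : Eexp (- (n%:R * L)) = (y ^+ n)^-1.
  have := E_neg (sq_le (abs_natmul n L) hL2); rewrite En => h.
  by apply: (mulIf yn0); rewrite h mulVf.
rewrite En Em.
have s0 : (2%:R * phi - 1) != 0.
  by apply/eqP => s0; move: hs5; rewrite s0 expr0n /= => /eqP; rewrite eq_sym; apply/negP; apply: nat_nz.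
have t0 : (2%:R : K) != 0 by apply: nat_nz.
have hb := binet n hphi.
have hpsi : 1 - phi = omega ^+ 2 / phi.
  rewrite hom; apply: (mulIf p0); rewrite mulrBl mul1r divfK // -expr2 hphi; ring.
have ef : ((fib n)%:R : K) = (phi ^+ n - (1 - phi) ^+ n) / (2%:R * phi - 1).
  by rewrite hb mulrC mulKf.
rewrite ef hpsi /y expr_div_n expr_div_n -exprM mulnC exprM.
set P := phi ^+ n; set W := omega ^+ n.
have P0 : P != 0 by rewrite expf_neq0.
have W0 : W != 0 by rewrite expf_neq0.
field; by rewrite s0 t0 P0 W0.
Qed.


Lemma abs_intE (z : int) : abs (z%:~R : K) = abs ((`|z|%N)%:R : K).
Proof. by case: z => n; rewrite // NegzE mulrNz absN. Qed.

Lemma int_abs (z : int) : z != 0 -> abs (z%:~R : K) = c5 ^+ logn 5 `|z|.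
Proof. by move=> z0; rewrite abs_intE abs_natE // absz_gt0. Qed.

Lemma int_nz (z : int) : z != 0 -> (z%:~R : K) != 0.
Proof.
move=> z0; apply/eqP => /abeq0; rewrite int_abs // => /eqP.
by rewrite expf_eq0 (negbTE (lt0r_neq0 c5_gt0)) andbF.
Qed.

Lemma M_nz (X Y : int) : X != 0 -> X ^+ 2 + X * Y - Y ^+ 2 != 0.
Proof.
move=> X0; apply/eqP => M0.
have e4 : (2 * X + Y) ^+ 2 = 5 * Y ^+ 2.
  apply/eqP; rewrite -subr_eq0; apply/eqP.
  have e : (2 * X + Y) ^+ 2 - 5 * Y ^+ 2 = 4 * (X ^+ 2 + X * Y - Y ^+ 2) by ring.
  by rewrite e M0 mulr0.
have [Y0|Y0] := eqVneq Y 0.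
  move: M0; rewrite Y0 mulr0 expr0n /= addr0 subr0 => /eqP; rewrite sqrf_eq0; exact/negP.
have := congr1 absz e4; rewrite abszM !abszX /= => en.
have v0 : (0 < `|Y|)%N by rewrite absz_gt0.
have en' : (`|(2 * X + Y)%R| ^ 2 = 5 * `|Y| ^ 2)%N by move: en; lia.
have u0 : (0 < `|(2 * X + Y)%R|)%N.
  rewrite absz_gt0; apply/eqP => u; move: e4; rewrite u expr0n /= => /eqP.
  rewrite eq_sym mulf_eq0 sqrf_eq0 (negbTE Y0) orbF //.
have := congr1 (logn 5) en'; rewrite lognM ?expn_gt0 ?v0 // !lognX (logn_prime _ (isT : prime 5)) /=.
lia.
Qed.

Lemma LB (phi : K) (X Y : int) : phi ^+ 2 = phi + 1 -> abs phi <= 1 -> X != 0 ->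
  exists k, c5 ^+ k <= abs (X%:~R + Y%:~R * phi).
Proof.
move=> hphi ap X0; have M0 := M_nz Y X0.
exists (logn 5 `|(X ^+ 2 + X * Y - Y ^+ 2)%R|).
have e : (X%:~R + Y%:~R * phi) * (X%:~R + Y%:~R - Y%:~R * phi) =
   ((X ^+ 2 + X * Y - Y ^+ 2) : int)%:~R.
  rewrite !expr2 !(intrD, mulrNz, intrM).
  have e : (X%:~R + Y%:~R * phi) * (X%:~R + Y%:~R - Y%:~R * phi) =
    (X%:~R : K) * X%:~R + X%:~R * Y%:~R - Y%:~R * Y%:~R + Y%:~R * Y%:~R * (phi + 1 - phi ^+ 2) by ring.
  by rewrite e hphi subrr mulr0 addr0.
rewrite -int_abs // -e abM -[X in _ <= X]mulr1; apply: ler_wpM2l; first exact: ab0.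
apply: absB_le; first by apply: absD_le; apply: abs_int.
rewrite abM -[X in _ <= X]mulr1; apply: ler_pM; rewrite ?ab0 ?abs_int //.
Qed.

Lemma arch (phi omega : K) : phi ^+ 2 = phi + 1 -> abs phi <= 1 -> omega ^+ 2 = -1 ->
  abs omega <= 1 ->
  (forall (y : K) (eps : R), 0 < eps ->
      exists a b : rat, abs (y - (ratr a + ratr b * phi)) < eps) ->
  forall eps : R, 0 < eps -> exists k, c5 ^+ k < eps.
Proof.
move=> hphi ap hom ao hd eps e0.
set e' := Num.min eps 1.
have e'0 : 0 < e' by rewrite lt_min e0 ltr01.
have [a [b hab]] := hd omega e' e'0.
set q := ratr a + ratr b * phi.
set d := omega - q.
have dl : abs d < e' by [].
have d1 : abs d < 1 by apply: lt_le_trans dl _; rewrite ge_min lexx orbT.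
have hq : abs (q ^+ 2 + 1) < e'.
  have e : q ^+ 2 + 1 = - (d * (2%:R * omega - d)) + (omega ^+ 2 + 1) by rewrite /d; ring.
  rewrite e hom addNr addr0 absN abM.
  apply: le_lt_trans dl; rewrite -[X in _ <= X]mulr1; apply: ler_wpM2l; first exact: ab0.
  apply: absB_le; last exact: ltW.
  rewrite abM -[X in _ <= X]mulr1; apply: ler_pM; rewrite ?ab0 ?abs_nat //.
set na := numq a; set da := denq a; set nb := numq b; set db := denq b.
have da0 : da != 0 by rewrite /da denq_neq0.
have db0 : db != 0 by rewrite /db denq_neq0.
set D := da * db; set A := na * db; set B := nb * da.
have D0 : D != 0 by rewrite mulf_neq0.
have hqD : q * D%:~R = A%:~R + B%:~R * phi.
  have h1 := int_nz da0; have h2 := int_nz db0.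
  rewrite /q /ratr /D /A /B -/na -/da -/nb -/db !intrM; field; by rewrite h1 h2.
clearbody A B D.
set X := A ^+ 2 + B ^+ 2 + D ^+ 2; set Y := 2 * A * B + B ^+ 2.
have X0 : X != 0.
  have : 0 < X.
    rewrite /X; apply: lt_le_trans (_ : 0 < D ^+ 2) _.
      by rewrite exprn_even_gt0 //=.
    by rewrite lerDr addr_ge0 // sqr_ge0.
  by rewrite lt0r => /andP [].
have eX : (q ^+ 2 + 1) * (D%:~R) ^+ 2 = X%:~R + Y%:~R * phi.
  have e : (q ^+ 2 + 1) * (D%:~R) ^+ 2 = (q * D%:~R) ^+ 2 + (D%:~R) ^+ 2 by ring.
  rewrite e hqD /X /Y !expr2 !intrD !intrM.
  have e2 : ((A%:~R : K) + B%:~R * phi) * (A%:~R + B%:~R * phi) + D%:~R * D%:~R =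
    A%:~R * A%:~R + B%:~R * B%:~R + D%:~R * D%:~R + (2%:~R * A%:~R * B%:~R + B%:~R * B%:~R) * phi
    + B%:~R * B%:~R * (phi ^+ 2 - phi - 1) by ring.
  have z : phi + 1 - phi - 1 = 0 :> K by ring.
  by rewrite e2 hphi z mulr0 addr0.
have [k hk] := LB Y hphi ap X0.
exists k; apply: le_lt_trans hk _; rewrite -eX abM.
apply: le_lt_trans (_ : abs (q ^+ 2 + 1) < eps); last first.
  by apply: lt_le_trans hq _; rewrite ge_min lexx.
rewrite -[X in _ <= X]mulr1; apply: ler_wpM2l; first exact: ab0.
by rewrite absX; apply: exprn_ile1; [exact: ab0|exact: abs_int].
Qed.


Lemma prep (phi omega : K) : phi ^+ 2 = phi + 1 -> omega ^+ 4 = 1 ->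
  abs (omega - 3%:R) <= abs (2%:R * phi - 1) ->
  [/\ omega ^+ 2 = -1, abs phi <= 1, abs omega <= 1,
      abs (phi / omega - 1) ^+ 2 <= c5 & (2%:R * phi - 1) ^+ 2 = 5%:R].
Proof.
move=> hphi hom4 ho3.
have hs5 : (2%:R * phi - 1) ^+ 2 = 5%:R.
  have e : (2%:R * phi - 1) ^+ 2 = 5%:R + 4%:R * (phi ^+ 2 - phi - 1) :> K by ring.
  have z : phi + 1 - phi - 1 = 0 :> K by ring.
  by rewrite e hphi z mulr0 addr0.
set s := abs (2%:R * phi - 1).
have s2 : s ^+ 2 = c5 by rewrite /s -absX hs5 h5.
have s1 : s < 1 by apply: abs_lt1; rewrite s2.
have s0 : 0 <= s by apply: ab0.
have a2 : abs (2%:R : K) = 1 by apply: abs_coprime.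
have a3 : abs (3%:R : K) = 1 by apply: abs_coprime.
have a4 : abs (4%:R : K) = 1 by apply: abs_coprime.
have hom : omega ^+ 2 = -1.
  have e : (omega ^+ 2 - 1) * (omega ^+ 2 + 1) = 0.
    have e : (omega ^+ 2 - 1) * (omega ^+ 2 + 1) = omega ^+ 4 - 1 by ring.
    by rewrite e hom4 subrr.
  move/eqP: e; rewrite mulf_eq0 => /orP [|/eqP e]; last first.
    by apply/eqP; rewrite -subr_eq0 opprK e.
  move=> /eqP e1.
  have e2 : (omega - 1) * (omega + 1) = 0 by rewrite -e1; ring.
  move/eqP: e2; rewrite mulf_eq0 => /orP [/eqP e|/eqP e].
    have : omega = 1 by apply/eqP; rewrite -subr_eq0 e.
    move=> o1; move: ho3; rewrite o1 (_ : 1 - 3%:R = - 2%:R :> K); last by ring.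
    rewrite absN a2 -/s => h; by move: (lt_le_trans s1 h); rewrite ltxx.
  have : omega = -1 by apply/eqP; rewrite -subr_eq0 opprK e.
  move=> o1; move: ho3; rewrite o1 (_ : -1 - 3%:R = - 4%:R :> K); last by ring.
  rewrite absN a4 -/s => h; by move: (lt_le_trans s1 h); rewrite ltxx.
have ao3 : abs (omega - 3%:R) <= s by [].
have ap3 : abs (phi - 3%:R) <= s.
  have e : phi - 3%:R = (2%:R * phi - 1 - 5%:R) * 2%:R^-1 :> K.
    have t0 : (2%:R : K) != 0 by apply: nat_nz.
    field; exact: t0.
  rewrite e abM absV a2 invr1 mulr1; apply: absB_le => //.
  rewrite h5 -/c5 -s2 expr2; nra.
have ao : abs omega <= 1.
  have e : omega = 3%:R + (omega - 3%:R) by ring.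
  rewrite e; apply: absD_le; rewrite ?a3 //; lra.
have ap : abs phi <= 1.
  have e : phi = 3%:R + (phi - 3%:R) by ring.
  rewrite e; apply: absD_le; rewrite ?a3 //; lra.
have aom : abs omega = 1.
  have h : abs omega ^+ 2 = 1 by rewrite -absX hom absN1.
  have := ab0 omega; move: h; rewrite expr2 => h h0; nra.
have o0 : omega != 0 by apply/eqP => o0; move: aom; rewrite o0 abs0 => /eqP; rewrite eq_sym oner_eq0.
split => //.
have e : phi / omega - 1 = (phi - omega) / omega by field.
rewrite e absDiv aom divr1 -s2; apply: lerXn2r; rewrite ?nnegrE ?ab0 //.
have e2 : phi - omega = (phi - 3%:R) - (omega - 3%:R) by ring.
by rewrite e2; apply: absB_le.
Qed.

End Abs.

Unset Implicit Arguments.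
Set Strict Implicit.

Theorem corollary5p3 (R : realFieldType) (K : fieldType) (abs : K -> R)
  (phi omega : K)
  (habs : is_nonarch_abs abs)
  (hcompl : complete_abs abs)
  (h5 : abs 5%:R = 5%:R^-1)
  (hphi : phi ^+ 2 = phi + 1)
  (hdense : forall (y : K) (eps : R), 0 < eps ->
      exists a b : rat, abs (y - (ratr a + ratr b * phi)) < eps)
  (homega4 : omega ^+ 4 = 1)
  (homega3 : abs (omega - 3%:R) <= abs (2%:R * phi - 1)) :
  exists L : K,
    cvg_to abs (log_partial (phi / omega)) L /\
    forall x : K, in_Z5 abs x ->
      exists s : K,
        cvg_to abs (sinh_partial (x * L)) s /\
        forall n : nat, x = n%:R ->
          2%:R / (2%:R * phi - 1) * s = (fib n)%:R / omega ^+ n.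
Proof.
case: habs => ab0 abeq0 abM abD.
have [hom ap ao ht hs5] := prep ab0 abeq0 abM abD h5 hphi homega4 homega3.
apply: (core ab0 abeq0 abM abD h5 _ hcompl hphi hom ht hs5).
move=> eps e0; exact: (arch ab0 abeq0 abM abD h5 hphi ap hom ao hdense e0).
Qed.
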